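(* Let $\mathcal H$ be a finite-dimensional complex Hilbert space, $\rho$ a density operator on $\mathcal H$, $V,W$ unitary operators on $\mathcal H$, and $|\phi\rangle$ any unit vector. Let $F=\operatorname{Tr}(W^{\dagger}V^{\dagger}WV\rho)$, and define $\theta_{VW}^{\phi}=\arccos\big\|\sqrt\rho\,(VW)^{\dagger}|\phi\rangle\big\|$ and $\theta_{WV}^{\phi}=\arccos\big\|\sqrt\rho\,(WV)^{\dagger}|\phi\rangle\big\|$ (the norms lie in $[0,1]$). Then $$|F|\le\cos\big(\theta^{\phi}_{VW}-\theta^{\phi}_{WV}\big).$$
   Context: $\|\cdot\|$ is the vector norm on $\mathcal H$; $\sqrt\rho$ is the positive square root of $\rho$. *)

(* Defs.v *)
From HB Require Import structures.
From mathcomp Require Import all_boot all_order all_algebra.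
From mathcomp Require Import complex.
From mathcomp Require Import reals trigo.
Set Implicit Arguments. Unset Strict Implicit. Unset Printing Implicit Defensive.
Import Order.TTheory GRing.Theory Num.Theory.
Local Open Scope ring_scope.

Section Defs.
Variable R : realType.
Local Notation C := (complex R).

Definition cmod (z : C) : R := Num.sqrt (complex.Re z ^+ 2 + complex.Im z ^+ 2).

Definition cconj (z : C) : C := Complex (complex.Re z) (- complex.Im z).

Definition adj m n (A : 'M[C]_(m, n)) : 'M[C]_(n, m) := (map_mx cconj A)^T.

Definition vnorm n (v : 'cV[C]_n) : R := Num.sqrt (\sum_i cmod (v i 0) ^+ 2).

Definition hermitian n (A : 'M[C]_n) : Prop := adj A = A.

Definition psd n (A : 'M[C]_n) : Prop :=
  hermitian A /\ forall x : 'cV[C]_n, complex.Im ((adj x *m A *m x) 0 0) = 0 /\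
                                      0 <= complex.Re ((adj x *m A *m x) 0 0).

Definition density n (rho : 'M[C]_n) : Prop := psd rho /\ \tr rho = 1.

Definition unitary n (U : 'M[C]_n) : Prop :=
  adj U *m U = 1%:M /\ U *m adj U = 1%:M.

Definition is_psd_sqrt n (S A : 'M[C]_n) : Prop := psd S /\ S *m S = A.
End Defs.

(* Main.v *)
Require Import Defs.
From HB Require Import structures.
From mathcomp Require Import all_boot all_order all_algebra.
From mathcomp Require Import complex.
From mathcomp Require Import reals trigo.
From mathcomp Require Import ring lra.
Import Order.TTheory GRing.Theory Num.Theory.
Set Implicit Arguments. Unset Strict Implicit.
Local Open Scope ring_scope.

Section Aux.
Variable R : realType.
Local Notation C := (complex R).

Lemma cconjE (z : C) : cconj z = z^*.
Proof. by case: z. Qed.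

Lemma adjE m n (A : 'M[C]_(m, n)) : adj A = (map_mx Num.conj A)^T.
Proof. by rewrite /adj; congr (_^T); apply/matrixP => i j; rewrite !mxE cconjE. Qed.

Lemma adjM m n p (A : 'M[C]_(m, n)) (B : 'M[C]_(n, p)) :
  adj (A *m B) = adj B *m adj A.
Proof. by rewrite !adjE map_mxM trmx_mul. Qed.

Lemma adjK m n (A : 'M[C]_(m, n)) : adj (adj A) = A.
Proof. by apply/matrixP => i j; rewrite !adjE !mxE conjCK. Qed.

Lemma adjD m n (A B : 'M[C]_(m, n)) : adj (A + B) = adj A + adj B.
Proof. by apply/matrixP => i j; rewrite !adjE !mxE rmorphD. Qed.

Lemma adjN m n (A : 'M[C]_(m, n)) : adj (- A) = - adj A.
Proof. by apply/matrixP => i j; rewrite !adjE !mxE rmorphN. Qed.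

Lemma adj1 n : adj (1%:M : 'M[C]_n) = 1%:M.
Proof. by apply/matrixP => i j; rewrite !adjE !mxE conjC_nat eq_sym. Qed.

Lemma trace_adj n (A : 'M[C]_n) : \tr (adj A) = (\tr A)^*.
Proof. by rewrite adjE mxtrace_tr /mxtrace rmorph_sum; apply: eq_bigr => i _; rewrite mxE. Qed.

Lemma conj_mulE (z : C) : z^* * z = (((cmod z) ^+ 2)%:C)%C.
Proof.
by rewrite -normCKC normc_def /cmod rmorphXn.
Qed.

Lemma CS (I : finType) (x y : I -> C) :
  `|\sum_i ((x i)^* * y i)| ^+ 2 <= (\sum_i ((x i)^* * x i)) * (\sum_i ((y i)^* * y i)).
Proof.
set v := \sum_i ((x i)^* * y i); set u := \sum_i ((x i)^* * x i); set Y := \sum_i ((y i)^* * y i).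
have ge0 (z : C) : 0 <= z^* * z by rewrite mulrC mul_conjC_ge0.
have u0 : 0 <= u by apply: sumr_ge0 => i _.
have uR : u^* = u.
  by rewrite rmorph_sum; apply: eq_bigr => i _; rewrite rmorphM /= conjCK mulrC.
have vR : v^* = \sum_i ((y i)^* * x i).
  by rewrite rmorph_sum; apply: eq_bigr => i _; rewrite rmorphM /= conjCK mulrC.
have key : 0 <= \sum_i ((u * y i - v * x i)^* * (u * y i - v * x i)).
  by apply: sumr_ge0 => i _.
have E : \sum_i ((u * y i - v * x i)^* * (u * y i - v * x i))
   = u * (u * Y - v^* * v).
  transitivity (\sum_i (u * u * ((y i)^* * y i) - u * v * ((y i)^* * x i)
                  - u * v^* * ((x i)^* * y i) + v^* * v * ((x i)^* * x i))).
    by apply: eq_bigr => i _; rewrite rmorphB !rmorphM /= uR; ring.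
  rewrite big_split /= sumrB sumrB -!mulr_sumr -vR.
  rewrite -/u -/Y -/v; ring.
rewrite normCKC.
have [u0'|uneq0] := eqVneq u 0.
  have x0 : forall i, x i = 0.
    move=> i; have /psumr_eq0P H := u0'.
    by have /eqP := H (fun i _ => ge0 (x i)) i isT; rewrite mulrC mul_conjC_eq0 => /eqP.
  have -> : v = 0 by rewrite /v big1 // => i _; rewrite x0 rmorph0 mul0r.
  by rewrite u0' !mul0r mulr0.
have upos : 0 < u by rewrite lt_def uneq0 u0.
rewrite E in key; rewrite (pmulr_rge0 _ upos) subr_ge0 in key.
exact: key.
Qed.


Definition fr n (X Y : 'M[C]_n) := \tr (adj X *m Y).

Lemma frE n (X Y : 'M[C]_n) :
  fr X Y = \sum_(p : ('I_n * 'I_n)%type) (X (fst p) (snd p))^* * Y (fst p) (snd p).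
Proof.
transitivity (\sum_i \sum_j (X j i)^* * Y j i).
  by rewrite /fr /mxtrace; apply: eq_bigr => i _; rewrite mxE; apply: eq_bigr => j _; rewrite adjE !mxE.
by rewrite exchange_big /= (pair_big xpredT xpredT (fun i j => (X i j)^* * Y i j)).
Qed.

Lemma fr_CS n (X Y : 'M[C]_n) : `|fr X Y| ^+ 2 <= fr X X * fr Y Y.
Proof. by rewrite !frE; apply: CS. Qed.

Lemma fr_ge0 n (X : 'M[C]_n) : 0 <= fr X X.
Proof. by rewrite frE; apply: sumr_ge0 => i _; rewrite mulrC mul_conjC_ge0. Qed.

Lemma vnorm_sq n (v : 'cV[C]_n) : (((vnorm v) ^+ 2)%:C)%C = (adj v *m v) 0 0.
Proof.
rewrite /vnorm sqr_sqrtr; last by apply: sumr_ge0 => i _; rewrite sqr_ge0.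
rewrite rmorph_sum !mxE; apply: eq_bigr => i _.
by rewrite adjE !mxE conj_mulE.
Qed.

Lemma fr_proj n (M X Y : 'M[C]_n) : adj M *m M = M ->
  fr (M *m X) (M *m Y) = \tr (adj X *m M *m Y).
Proof. by move=> hM; rewrite /fr adjM -mulmxA (mulmxA (adj M)) hM mulmxA. Qed.

Lemma normcE (z : C) : `|z| = ((cmod z)%:C)%C.
Proof. by rewrite normc_def. Qed.

End Aux.

Unset Implicit Arguments.

Lemma arith (R : realType) (c1 c2 t1 t2 f : R) :
  0 <= c1 -> 0 <= c2 -> 0 <= t1 -> 0 <= t2 ->
  0 <= 1 - c1 ^+ 2 -> 0 <= 1 - c2 ^+ 2 ->
  t1 ^+ 2 <= c1 ^+ 2 * c2 ^+ 2 -> t2 ^+ 2 <= (1 - c1 ^+ 2) * (1 - c2 ^+ 2) ->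
  f <= t1 + t2 -> f <= cos (acos c1 - acos c2).
Proof.
move=> c1g c2g t1g t2g d1 d2 h1 h2 h3.
have e1 : t1 <= c1 * c2.
  have p : 0 <= c1 * c2 by rewrite mulr_ge0.
  rewrite -exprMn in h1.
  nra.
set s1 := Num.sqrt (1 - c1 ^+ 2); set s2 := Num.sqrt (1 - c2 ^+ 2).
have e2 : t2 <= s1 * s2.
  have p : 0 <= s1 * s2 by rewrite mulr_ge0 ?sqrtr_ge0.
  rewrite -(sqr_sqrtr d1) -(sqr_sqrtr d2) -/s1 -/s2 in h2.
  rewrite -exprMn in h2.
  nra.
have c1in : -1 <= c1 <= 1 by apply/andP; split; nra.
have c2in : -1 <= c2 <= 1 by apply/andP; split; nra.
rewrite cosB !acosK ?inE // !sin_acos // -/s1 -/s2.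
lra.
Qed.

Theorem theorem5 (R : realType) (n : nat)
  (rho sqrt_rho V W : 'M[complex R]_n) (phi : 'cV[complex R]_n) :
  density rho ->
  is_psd_sqrt sqrt_rho rho ->
  unitary V -> unitary W ->
  vnorm phi = 1 ->
  let F := \tr (adj W *m adj V *m W *m V *m rho) in
  let theta_VW := acos (vnorm (sqrt_rho *m adj (V *m W) *m phi)) in
  let theta_WV := acos (vnorm (sqrt_rho *m adj (W *m V) *m phi)) in
  cmod F <= cos (theta_VW - theta_WV).
Proof.
move=> [_ trrho] [[hS _] SS] [VV _] [WW _] nphi; cbv zeta.
set S := sqrt_rho; set A := V *m W; set B := W *m V.
have AA : adj A *m A = 1%:M.
  by rewrite /A adjM -mulmxA (mulmxA (adj V)) VV mul1mx WW.
have BB : adj B *m B = 1%:M.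
  by rewrite /B adjM -mulmxA (mulmxA (adj W)) WW mul1mx VV.
have hS' : adj S = S by [].
set X := A *m S; set Y := B *m S.
have FE : \tr (adj W *m adj V *m W *m V *m rho) = fr X Y.
  rewrite /fr /X /Y adjM hS' /A adjM -!mulmxA [RHS]mxtrace_mulC -!mulmxA SS.
  done.
have XX : fr X X = 1.
  by rewrite /fr /X adjM hS' -mulmxA (mulmxA (adj A)) AA mul1mx mxtrace_mulC SS trrho.
have YY : fr Y Y = 1.
  by rewrite /fr /Y adjM hS' -mulmxA (mulmxA (adj B)) BB mul1mx mxtrace_mulC SS trrho.
set P := phi *m adj phi.
have pp : adj phi *m phi = 1%:M.
  rewrite [LHS]mx11_scalar -vnorm_sq nphi expr1n.
  by apply/matrixP => i j; rewrite !mxE.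
have PP : adj P *m P = P.
  by rewrite /P adjM adjK -mulmxA (mulmxA (adj phi)) pp mul1mx.
set Q := 1%:M - P.
have QQ : adj Q *m Q = Q.
  rewrite /Q adjD adjN adj1 mulmxBl mul1mx mulmxBr mulmx1.
  have -> : adj P *m P = P by [].
  have -> : adj P = P by rewrite /P adjM adjK.
  by rewrite subrr subr0.
have dec (Z1 Z2 : 'M[complex R]_n) : fr Z1 Z2 = fr (P *m Z1) (P *m Z2) + fr (Q *m Z1) (Q *m Z2).
  rewrite !fr_proj // -mxtraceD -mulmxDl -mulmxDr /Q addrC subrK mulmx1 //.
have pX : fr (P *m X) (P *m X) = (((vnorm (S *m adj A *m phi)) ^+ 2)%:C)%C.
  rewrite (fr_proj _ _ PP) vnorm_sq /P mulmxA -(mulmxA _ (adj phi)) mxtrace_mulC trace_mx11.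
  by rewrite (adjM (S *m adj A) phi) (adjM S (adj A)) (adjK A) hS' /X (adjM A S) hS'.
have pY : fr (P *m Y) (P *m Y) = (((vnorm (S *m adj B *m phi)) ^+ 2)%:C)%C.
  rewrite (fr_proj _ _ PP) vnorm_sq /P mulmxA -(mulmxA _ (adj phi)) mxtrace_mulC trace_mx11.
  by rewrite (adjM (S *m adj B) phi) (adjM S (adj B)) (adjK B) hS' /Y (adjM B S) hS'.
set c1 := vnorm (S *m adj A *m phi).
set c2 := vnorm (S *m adj B *m phi).
have qX : fr (Q *m X) (Q *m X) = ((1 - c1 ^+ 2)%:C)%C.
  by rewrite rmorphB rmorph1 -XX (dec X X) pX addrC addKr.
have qY : fr (Q *m Y) (Q *m Y) = ((1 - c2 ^+ 2)%:C)%C.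
  by rewrite rmorphB rmorph1 -YY (dec Y Y) pY addrC addKr.
have d1 : 0 <= 1 - c1 ^+ 2 by rewrite -lecR -qX fr_ge0.
have d2 : 0 <= 1 - c2 ^+ 2 by rewrite -lecR -qY fr_ge0.
set T1 := fr (P *m X) (P *m Y).
set T2 := fr (Q *m X) (Q *m Y).
have h1 : cmod T1 ^+ 2 <= c1 ^+ 2 * c2 ^+ 2.
  by have := fr_CS (P *m X) (P *m Y); rewrite -/T1 pX pY normcE -!rmorphXn -rmorphM lecR.
have h2 : cmod T2 ^+ 2 <= (1 - c1 ^+ 2) * (1 - c2 ^+ 2).
  by have := fr_CS (Q *m X) (Q *m Y); rewrite -/T2 qX qY normcE -!rmorphXn -rmorphM lecR.
have h3 : cmod (fr X Y) <= cmod T1 + cmod T2.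
  rewrite -lecR rmorphD /= -!normcE (dec X Y); exact: ler_normD.
rewrite FE; apply: (@arith _ _ _ _ _ _ _ _ _ _ d1 d2 h1 h2 h3).
- exact: sqrtr_ge0.
- exact: sqrtr_ge0.
- exact: sqrtr_ge0.
- exact: sqrtr_ge0.
Qed.
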